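(* Let $\theta>0$. For every $x\in\mathbb{R}$, the Hölder exponent of $f_\theta$ at $x$ is \[ H_{f_\theta}(x)=\begin{cases}0 & \text{if } x \text{ is rational},\\ \theta/\tau(x) & \text{if } x \text{ is irrational}.\end{cases} \]
   Context: For $\theta>0$, the generalized Thomae function $f_\theta:\mathbb{R}\to\mathbb{R}$ is defined by $f_\theta(0)=1$, $f_\theta(x)=q^{-\theta}$ if $x$ is rational written as $x=p/q$ with $p\in\mathbb{Z}$, $q\in\mathbb{N}$ and $\gcd(p,q)=1$, and $f_\theta(x)=0$ if $x$ is irrational. For a locally bounded $f:\mathbb{R}\to\mathbb{R}$, $x\in\mathbb{R}$ and $\alpha\ge0$, one writes $f\in\Lambda^\alpha(x)$ if there exist a constant $C>0$ and a polynomial $P$ of degree less than $\alpha$ such that $|f(x+h)-P(h)|\le C|h|^\alpha$ for all $h$ in a neighborhood of $0$. The Hölder exponent of $f$ at $x$ is $H_f(x)=\sup\{\alpha\ge0: f\in\Lambda^\alpha(x)\}$. The irrationality exponent $\tau(x)$ of an irrational number $x$ is the supremum of the real numbers $\tau$ for which the inequality $|x-p/q|<q^{-\tau}$ has infinitely many solutions in nonzero integers $p,q$; one has $\tau(x)\ge2$, and $\tau(x)$ may equal $+\infty$, in which case $\theta/\tau(x)$ is read as $0$. *)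

(* Defs.v *)
From HB Require Import structures.
From mathcomp Require Import all_boot all_order all_algebra.
From mathcomp Require Import all_classical all_reals all_analysis.
Set Implicit Arguments. Unset Strict Implicit. Unset Printing Implicit Defensive.
Import Order.TTheory GRing.Theory Num.Theory.
Import numFieldNormedType.Exports.
Local Open Scope classical_set_scope.
Local Open Scope ring_scope.

Definition lowest_denom {R : realType} (x : R) (q : nat) : Prop :=
  (0 < q)%N /\ exists p : int, coprime `|p|%N q /\ x = p%:~R / q%:R.

Definition is_rational {R : realType} (x : R) : Prop :=
  exists p : int, exists q : nat, (0 < q)%N /\ x = p%:~R / q%:R.

Definition thomae {R : realType} (theta : R) (x : R) : R :=
  if x == 0 then 1 else
  match pselect (exists q : nat, lowest_denom x q) with
  | left H => (projT1 (cid H))%:R `^ (- theta)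
  | right _ => 0
  end.

(* f \in Lambda^alpha(x): polynomial P of degree < alpha (size P - 1 = deg P) *)
Definition pointwise_holder {R : realType} (f : R -> R) (x alpha : R) : Prop :=
  exists C : R, 0 < C /\
  exists P : {poly R}, ((size P)%:R - 1 < alpha) /\
    \forall h \near (0 : R), `|f (x + h) - P.[h]| <= C * `|h| `^ alpha.

Definition holder_exponent {R : realType} (f : R -> R) (x : R) : \bar R :=
  ereal_sup [set (a%:E)%E | a in [set a : R | 0 <= a /\ pointwise_holder f x a]].

Definition irrationality_exponent {R : realType} (x : R) : \bar R :=
  ereal_sup [set (t%:E)%E | t in [set t : R |
    infinite_set [set pq : int * int | (pq.1 != 0) && (0 < pq.2) /\
       `|x - pq.1%:~R / pq.2%:~R| < (pq.2%:~R) `^ (- t)]]].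

(* Main.v *)
Require Import Defs.
From HB Require Import structures.
From mathcomp Require Import all_boot all_order all_algebra.
From mathcomp Require Import all_classical all_reals all_analysis.
From mathcomp Require Import ring lra zify.
Import Order.TTheory GRing.Theory Num.Theory.
Import numFieldNormedType.Exports.
Local Open Scope classical_set_scope.
Local Open Scope ring_scope.

Lemma rat_add {R : realType} {a b : R} : is_rational a -> is_rational b -> is_rational (a + b).
Proof.
move=> [p [q [q0 ->]]] [p' [q' [q'0 ->]]].
exists (p * q'%:Z + p' * q%:Z), (q * q')%N; split; first by rewrite muln_gt0 q0.
have hq : (q%:R : R) != 0 by rewrite pnatr_eq0 -lt0n.
have hq' : (q'%:R : R) != 0 by rewrite pnatr_eq0 -lt0n.
rewrite natrM rmorphD !rmorphM /=; field; by rewrite hq hq'.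
Qed.

Lemma rat_opp {R : realType} {a : R} : is_rational a -> is_rational (- a).
Proof. move=> [p [q [q0 ->]]]; exists (- p), q; split => //; by rewrite rmorphN mulNr. Qed.

Lemma rat_mulnat {R : realType} (n : nat) {a : R} : is_rational a -> is_rational (n%:R * a).
Proof. move=> [p [q [q0 ->]]]; exists (n%:Z * p), q; split => //; by rewrite rmorphM /= mulrA. Qed.

Lemma rat_sub {R : realType} {a b : R} : is_rational a -> is_rational b -> is_rational (a - b).
Proof. by move=> ha hb; apply: rat_add => //; exact: rat_opp. Qed.

Lemma lowest_exists {R : realType} (y : R) : is_rational y -> exists q, lowest_denom y q.
Proof.
move=> [p [q [q0 ->]]].
pose r : rat := p%:~R / q%:R.
exists `|denq r|%N; split; first by rewrite absz_gt0 denq_neq0.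
exists (numq r); split; first by rewrite coprime_num_den.
have -> : (p%:~R / q%:R : R) = ratr r by rewrite /r fmorph_div /= rmorph_int rmorph_nat.
rewrite /ratr; congr (_ / _); rewrite pmulrn; congr (_%:~R); by rewrite gez0_abs ?(ltW (denq_gt0 r)).
Qed.

Lemma lowest_le {R : realType} (y : R) q'' (p : int) (q : nat) :
  lowest_denom y q'' -> (0 < q)%N -> y = p%:~R / q%:R -> (q'' <= q)%N.
Proof.
move=> [q''0 [p'' [cop ->]]] q0 e.
have hq : (q%:R : R) != 0 by rewrite pnatr_eq0 -lt0n.
have hq'' : (q''%:R : R) != 0 by rewrite pnatr_eq0 -lt0n.
have eR : ((p'' * q%:Z)%:~R : R) = (p * q''%:Z)%:~R.
  rewrite !intrM -!pmulrn; apply/eqP; rewrite -eqr_div //; exact/eqP.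
move/intr_inj: eR => /(congr1 absz); rewrite !abszM /= => eN.
apply: dvdn_leq => //.
have : (q'' %| `|p''| * q)%N by rewrite eN dvdn_mull.
by rewrite Gauss_dvdr // coprime_sym.
Qed.

Lemma thomae_rat_ge {R : realType} (th y : R) (p : int) (q : nat) : 0 <= th ->
  y != 0 -> (0 < q)%N -> y = p%:~R / q%:R -> q%:R `^ (- th) <= thomae th y.
Proof.
move=> th0 y0 q0 e; rewrite /thomae (negbTE y0); case: pselect => [H|H]; last first.
  by exfalso; apply: H; apply: lowest_exists; exists p, q.
case: (cid H) => q'' hq'' /=.
have le := @lowest_le R y q'' p q hq'' q0 e.
have q''0 : (0 < q'')%N by case: hq''.
rewrite !powRN lef_pV2 ?posrE ?powR_gt0 ?ltr0n //.
by apply: ge0_ler_powR => //; rewrite ?nnegrE ?ler0n // ler_nat.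
Qed.

Lemma thomae_rat_gt0 {R : realType} (th y : R) : is_rational y -> 0 < thomae th y.
Proof.
move=> hy; rewrite /thomae; case: ifP => // _; case: pselect => [H|H]; last first.
  by exfalso; apply: H; apply: lowest_exists.
case: (cid H) => q'' [q0 _] /=; by rewrite powR_gt0 ?ltr0n.
Qed.

Lemma thomae_irr {R : realType} (th y : R) : ~ is_rational y -> thomae th y = 0.
Proof.
move=> hy; rewrite /thomae; case: ifP => [/eqP y0|_].
  by exfalso; apply: hy; exists 0, 1%N; rewrite y0 mul0r.
case: pselect => // H; exfalso; case: H => q [q0 [p [_ e]]]; apply: hy; by exists p, q.
Qed.

Lemma sqrt2_irr {R : realType} : ~ is_rational (Num.sqrt 2 : R).
Proof.
move=> [p [q [q0 e]]].
have hq : (q%:R : R) != 0 by rewrite pnatr_eq0 -lt0n.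
have : (p%:~R : R) ^+ 2 = 2 * q%:R ^+ 2.
  have := sqr_sqrtr (ler0n R 2); rewrite e expr_div_n => h.
  by rewrite -h divfK // expf_neq0.
rewrite -rmorphXn /= -natrX -[2 * _]natrM pmulrn => /intr_inj.
move/(congr1 absz); rewrite abszX /= => eN.
have p0 : (0 < `|p|)%N.
  rewrite lt0n; apply/negP => /eqP p0; move: eN; rewrite p0 exp0n // => /esym/eqP.
  by rewrite muln_eq0 expn_eq0 /= (gtn_eqF q0).
have := congr1 (logn 2) eN.
rewrite lognM ?expn_gt0 ?q0 ?p0 // !lognX (logn_prime 2 (isT : prime 2)) /= => /(congr1 odd).
rewrite !oddM /= oddD /=; lia.
Qed.
Lemma natpowR_le1 {R : realType} (q : nat) (th : R) : (0 < q)%N -> 0 <= th ->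
  q%:R `^ (- th) <= 1.
Proof.
move=> q0 th0; rewrite -[leRHS](powRr0 (q%:R : R)).
by apply: (@ler_powR R q%:R); [rewrite ler1n|rewrite oppr_le0].
Qed.

Lemma thomae_ge0 {R : realType} (th y : R) : 0 <= thomae th y.
Proof. rewrite /thomae; case: ifP => // _; case: pselect => // H; exact: powR_ge0. Qed.

Lemma thomae_le1 {R : realType} (th y : R) : 0 <= th -> thomae th y <= 1.
Proof.
move=> th0; rewrite /thomae; case: ifP => // _; case: pselect => // H.
case: (cid H) => q [q0 _] /=; exact: natpowR_le1.
Qed.

Lemma holder0 {R : realType} (th x : R) : 0 <= th -> pointwise_holder (thomae th) x 0.
Proof.
move=> th0; exists 1; split => //; exists 0; split; first by rewrite size_poly0 sub0r ltrN10.
apply: filterE => h; rewrite horner0 subr0 powRr0 mul1r ger0_norm ?thomae_ge0//.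
exact: thomae_le1.
Qed.

Lemma near0_seq {R : realType} (y0 : R) {Q : R -> Prop} :
  (\forall e \near (0:R), Q e) -> exists n : nat, Q (y0 / n.+1%:R).
Proof.
move/nbhs_norm0P => [eps /= eps0 H]; exists (Num.truncn (`|y0| / eps)); apply: H => /=.
rewrite normrM normfV (ger0_norm (ler0n _ _)) ltr_pdivrMr ?ltr0n//.
by rewrite mulrC -ltr_pdivrMr// truncnS_gt.
Qed.

Lemma irr_shift {R : realType} (a b : R) : is_rational a -> ~ is_rational b -> ~ is_rational (a + b).
Proof. move=> ha hb hab; apply: hb; have := rat_sub hab ha; by rewrite addrC addKr. Qed.

Lemma irr_scale {R : realType} (s : R) (n : nat) : ~ is_rational s -> ~ is_rational (s / n.+1%:R).
Proof.
move=> hs h; apply: hs; have := rat_mulnat n.+1 h.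
by rewrite mulrC divfK // pnatr_eq0.
Qed.

Lemma powR_small {R : realType} {a c : R} : 0 < a -> 0 < c ->
  exists2 eta : R, 0 < eta & forall e : R, `|e| < eta -> `|e| `^ a <= c.
Proof.
move=> a0 c0; exists (c `^ a^-1); first by rewrite powR_gt0.
move=> e he; apply: (@le_trans _ _ ((c `^ a^-1) `^ a)).
  by apply: ge0_ler_powR; rewrite ?ltW // nnegrE // powR_ge0.
by rewrite -powRrM mulVf ?gt_eqF // powRr1 // ltW.
Qed.

Lemma rational_not_holder {R : realType} (th x a : R) : 0 < th -> is_rational x -> 0 < a ->
  ~ pointwise_holder (thomae th) x a.
Proof.
move=> th0 hx a0 [C [C0 [P [_ H]]]].
set c := thomae th x.
have c0 : 0 < c by exact: thomae_rat_gt0.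
have P0 : P.[0] = c.
  have := nbhs_singleton H; rewrite addr0 normr0 powR0 ?gt_eqF // mulr0.
  by rewrite normr_le0 subr_eq0 => /eqP <-.
have [eta eta0 Heta] := powR_small a0 (divr_gt0 c0 (mulr_gt0 (ltr0n R 2) C0)).
have hc : horner P x @[x --> (0:R)] --> P.[0] := @continuous_horner R P 0.
have hN : \forall e \near (0:R), (`|thomae th (x + e) - P.[e]| <= C * `|e| `^ a) /\ `|e| < eta /\
        `|P.[0] - P.[e]| < c / 2.
  near=> e; split; last split.
  - near: e; exact: H.
  - near: e; exact: (@nbhs0_lt R R eta eta0).
  - near: e; move/cvgrPdist_lt: hc; apply; exact: divr_gt0.
have [n [h1 [h2 h3]]] := near0_seq (Num.sqrt 2) hN.
set e := Num.sqrt 2 / n.+1%:R in h1 h2 h3.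
have ie : ~ is_rational (x + e) by apply: irr_shift => //; apply: irr_scale; exact: sqrt2_irr.
move: h1; rewrite thomae_irr // sub0r normrN => h1.
have := Heta _ h2 => h4.
have h5 : C * `|e| `^ a <= c / 2.
  apply: (le_trans (ler_wpM2l (ltW C0) h4)).
  have -> : C * (c / (2 * C)) = c / 2 by field; rewrite gt_eqF.
  by [].
move: h3; rewrite P0 => h3.
have := ler_normD (c - P.[e]) P.[e].
rewrite subrK (ger0_norm (ltW c0)) => h6.
lra.
Unshelve. all: end_near.
Qed.

Lemma irr_rat_bound {R : realType} (th x a C : R) (P : {poly R}) (delta : R) :
  ~ is_rational x -> 0 < a -> 0 <= C -> 0 < delta ->
  (forall h, `|h| < delta -> `|thomae th (x + h) - P.[h]| <= C * `|h| `^ a) ->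
  forall r, is_rational r -> `|r - x| < delta / 2 ->
  thomae th r <= C * (2 `^ a + 1) * `|r - x| `^ a.
Proof.
move=> hx a0 C0 d0 Hd r hr hrx.
set h0 := r - x.
have xh0 : x + h0 = r by rewrite /h0 addrC subrK.
have h00 : 0 < `|h0|.
  rewrite normr_gt0; apply/negP => /eqP h0E; apply: hx.
  by move: xh0; rewrite h0E addr0 => ->.
have HP : `|P.[h0]| <= C * 2 `^ a * `|h0| `^ a.
  apply/ler_addgt0Pr => eps eps0.
  have hc : \forall e \near (0:R), `|P.[h0] - P.[h0 + e]| < eps.
    apply/(nbhs0P (fun t => `|P.[h0] - P.[t]| < eps)).
    have := @continuous_horner R P h0; move/cvgrPdist_lt; exact.
  have hN : \forall e \near (0:R), `|P.[h0] - P.[h0 + e]| < eps /\ `|e| < `|h0| /\ `|e| < delta / 2.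
    near=> e; split; last split.
    - by near: e.
    - near: e; exact: (@nbhs0_lt R R _ h00).
    - near: e; apply: (@nbhs0_lt R R); exact: divr_gt0.
  have [n [h1 [h2 h3]]] := near0_seq x hN.
  set e := x / n.+1%:R in h1 h2 h3.
  have ie : ~ is_rational (x + (h0 + e)) by rewrite addrA xh0; apply: irr_shift => //; exact: irr_scale.
  have hle : `|h0 + e| < delta.
    apply: (le_lt_trans (ler_normD _ _)).
    have -> : delta = delta / 2 + delta / 2 by field.
    apply: ltrD => //.
  have key := Hd _ hle.
  rewrite thomae_irr // sub0r normrN in key.
  have hpow : `|h0 + e| `^ a <= 2 `^ a * `|h0| `^ a.
    rewrite -powRM // ?ler0n //.
    apply: ge0_ler_powR; [exact: ltW | by rewrite nnegrE | by rewrite nnegrE mulr_ge0 | ].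
    apply: (le_trans (ler_normD _ _)); rewrite mulr2n mulrDl mul1r lerD2l; exact: ltW.
  have := ler_normD (P.[h0] - P.[h0 + e]) P.[h0 + e].
  rewrite subrK => h4.
  apply: (le_trans h4); rewrite addrC -mulrA; apply: lerD; last exact: ltW.
  apply: (le_trans key); apply: ler_wpM2l => //.
have hh0 : `|h0| < delta by apply: (lt_trans hrx); rewrite ltr_pdivrMr // ltr_pMr // ltr1n.
have key := Hd _ hh0; rewrite xh0 in key.
have := ler_normD (thomae th r - P.[h0]) P.[h0].
rewrite subrK (ger0_norm (thomae_ge0 th r)) => h4.
apply: (le_trans h4).
have -> : C * (2 `^ a + 1) * `|r - x| `^ a = C * `|h0| `^ a + C * 2 `^ a * `|h0| `^ a by rewrite /h0; ring.
exact: lerD.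
Unshelve. all: end_near.
Qed.

Lemma pow_bound {R : realType} (g y B : R) : 0 < g -> 0 <= y -> y `^ g <= B -> y <= B `^ g^-1.
Proof.
move=> g0 y0 h.
have B0 : 0 <= B by apply: le_trans h; exact: powR_ge0.
rewrite -{1}(powRr1 y0) -(@mulfV _ g) ?gt_eqF // powRrM.
apply: ge0_ler_powR => //; [by rewrite invr_ge0 ltW | by rewrite nnegrE powR_ge0].
Qed.

Lemma int_abs_finite (K : nat) : finite_set [set z : int | (absz z <= K)%N].
Proof.
apply: (@sub_finite_set _ _ ((fun n : nat => n%:Z - K%:Z) @` `I_(K + K).+1)); last first.
  exact/finite_image/finite_II.
move=> z /= hz; exists (absz (z + K%:Z)); rewrite /=; lia.
Qed.

Lemma box_finite (K M : nat) :
  finite_set [set pq : int * int | (absz pq.1 <= K)%N /\ (absz pq.2 <= M)%N].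
Proof.
apply: (@sub_finite_set _ _ ([set z : int | (absz z <= K)%N] `*` [set z : int | (absz z <= M)%N])).
  by move=> [p q] /= [h1 h2]; split.
by apply: finite_setX; exact: int_abs_finite.
Qed.

Definition pairs {R : realType} (x t : R) := [set pq : int * int | (pq.1 != 0) && (0 < pq.2) /\
       `|x - pq.1%:~R / pq.2%:~R| < (pq.2%:~R) `^ (- t)].

Lemma holder_bound {R : realType} (th x a t : R) : ~ is_rational x -> 0 < th -> 0 < a ->
  pointwise_holder (thomae th) x a -> infinite_set (pairs x t) -> a * t <= th.
Proof.
move=> hx th0 a0 [C [C0 [P [_ H]]]] hinf; rewrite leNgt; apply/negP => hlt.
have t0 : 0 < t by rewrite -(pmulr_rgt0 _ a0); exact: lt_trans hlt.
move/nbhs_norm0P: H => [delta /= d0 Hd].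
have Hd' : forall h, `|h| < delta -> `|thomae th (x + h) - P.[h]| <= C * `|h| `^ a.
  by move=> h hh; apply: Hd.
set K0 := C * (2 `^ a + 1).
have K00 : 0 < K0 by rewrite mulr_gt0 // ltr_pwDr // powR_gt0.
set g := a * t - th.
have g0 : 0 < g by rewrite subr_gt0.
set M1 := K0 `^ g^-1.
set M2 := (2 / delta) `^ t^-1.
set Mn := Num.truncn (M1 + M2).
set Kp := Num.truncn ((`|x| + 1) * Mn%:R).
apply: hinf; apply: sub_finite_set (box_finite Kp Mn).
move=> [p q] [/andP [p0 q0] hpq]; rewrite /= in p0 q0 hpq *.
move: q0 hpq; case: q => // n n0 hpq.
have {n0} n0 : (0 < n)%N by exact: n0.
rewrite -pmulrn in hpq.
have n1 : (1 : R) <= n%:R by rewrite ler1n.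
have npos : (0 : R) < n%:R by rewrite ltr0n.
have hnt : n%:R `^ (- t) <= 1 by apply: natpowR_le1 => //; exact: ltW.
set r := p%:~R / n%:R : R.
have rr : is_rational r by exists p, n.
have r0 : r != 0 by rewrite /r mulf_neq0 // ?intr_eq0 // invr_eq0 gt_eqF.
have hxr : `|r - x| < n%:R `^ (- t) by rewrite distrC.
have nM : n%:R <= M1 + M2.
  case: (ltP (`|r - x|) (delta / 2)) => hc.
  - have lo := @thomae_rat_ge R th r p n (ltW th0) r0 n0 erefl.
    have up := @irr_rat_bound R th x a C P delta hx a0 (ltW C0) d0 Hd' r rr hc.
    have up2 : `|r - x| `^ a <= n%:R `^ (- (a * t)).
      rewrite mulrC -mulNr powRrM; apply: ge0_ler_powR; rewrite ?ltW // nnegrE ?powR_ge0 //.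
    have h1 : n%:R `^ (- th) <= K0 * n%:R `^ (- (a * t)).
      apply: (le_trans lo); apply: (le_trans up); exact: (@ler_wpM2l R K0 (ltW K00) _ _ up2).
    have h2 : n%:R `^ g <= K0.
      have e1 : n%:R `^ g = n%:R `^ (- th) * n%:R `^ (a * t).
        by rewrite -powRD ?gt_eqF ?implybT // addrC.
      have e2 : K0 = K0 * n%:R `^ (- (a * t)) * n%:R `^ (a * t).
        have nz : (n%:R : R) != 0 by rewrite gt_eqF.
        by rewrite -mulrA -powRD ?nz ?implybT // addNr powRr0 mulr1.
      rewrite e1 [X in _ <= X]e2; apply: ler_wpM2r => //; exact: powR_ge0.
    apply: le_trans (@pow_bound R g n%:R K0 g0 (ltW npos) h2) _; rewrite lerDl /M2 powR_ge0 //.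
  - have h1 : delta / 2 < (n%:R `^ t)^-1 by rewrite -powRN; exact: le_lt_trans hxr.
    have ntpos : 0 < n%:R `^ t by rewrite powR_gt0.
    have h2 : n%:R `^ t <= 2 / delta.
      rewrite -lef_pV2 ?posrE ?divr_gt0 // invf_div; exact: ltW.
    apply: le_trans (@pow_bound R t n%:R (2 / delta) t0 (ltW npos) h2) _; rewrite lerDr /M1 powR_ge0 //.
have nMn : (n <= Mn)%N.
  rewrite -ltnS -(ltr_nat R); apply: le_lt_trans nM _; exact: truncnS_gt.
split => //.
have hr1 : `|r| < `|x| + 1.
  have := ler_normD x (r - x); rewrite addrC subrK => h.
  apply: (le_lt_trans h); rewrite ltrD2l; exact: lt_le_trans hxr hnt.
have hp : `|p%:~R : R| = `|r| * n%:R.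
  by rewrite /r normrM normfV (ger0_norm (ltW npos)) divfK ?gt_eqF.
rewrite -ltnS -(ltr_nat R); apply: le_lt_trans (truncnS_gt _).
rewrite natr_absz intr_norm hp; apply: ler_pM => //; first exact: ltW.
by rewrite ler_nat.
Qed.

Lemma near_avoid1 {R : realType} (x v : R) : v != x -> \forall h \near (0:R), x + h != v.
Proof.
move=> vx; have d0 : 0 < `|v - x| by rewrite normr_gt0 subr_eq0.
near=> h; apply/negP => /eqP e.
have : `|h| < `|v - x| by near: h; exact: (@nbhs0_lt R R _ d0).
by rewrite -e addrC addKr ltxx.
Unshelve. all: end_near.
Qed.

Lemma near_avoid {R : realType} (x : R) (s : seq (int * int)) : ~ is_rational x ->
  \forall h \near (0:R), forall pq, pq \in s -> (0 < pq.2) -> x + h != pq.1%:~R / pq.2%:~R.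
Proof.
move=> hx; elim: s => [|a s IH]; first by apply: filterE.
have ha : (0 < a.2) -> \forall h \near (0:R), x + h != a.1%:~R / a.2%:~R.
  move=> a2; apply: near_avoid1; apply/negP => /eqP e; apply: hx.
  move: a2 e; case: a => p [n|n] //= n0 <-; exists p, n; split => //; by rewrite -pmulrn.
have [a2|a2] := boolP (0 < a.2).
- apply: filterS2 IH (ha a2) => h IHh hAh pq; rewrite in_cons => /orP [/eqP -> _ | hs].
  + exact: hAh.
  + exact: IHh.
- apply: filterS IH => h IHh pq; rewrite in_cons => /orP [/eqP -> hh | hs]; first by rewrite hh in a2.
  exact: IHh.
Qed.

Lemma holder_gap {R : realType} (th x a t : R) : ~ is_rational x -> 0 <= th -> 0 < a ->
  ~ infinite_set (pairs x t) -> a * t <= th -> pointwise_holder (thomae th) x a.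
Proof.
move=> hx th0 a0 /contrapT hfin hat.
have [s hs] := (finite_seqP _).1 hfin.
have x0 : 0 < `|x| by rewrite normr_gt0; apply/negP => /eqP x0; apply: hx; exists 0, 1%N; rewrite x0 mul0r.
exists 1; split => //; exists 0; split; first by rewrite size_poly0 sub0r (lt_trans _ a0) // ltrN10.
have hA := @near_avoid R x s hx.
apply: filterS2 hA (@nbhs0_lt R R _ x0) => h hAh hsm.
rewrite horner0 subr0 mul1r ger0_norm ?thomae_ge0 //.
have hxh : x + h != 0.
  apply/negP => /eqP e; move: hsm.
  by move: e; rewrite addrC => /eqP; rewrite addr_eq0 => /eqP ->; rewrite normrN ltxx.
rewrite /thomae (negbTE hxh); case: pselect => // H; case: (cid H) => q [q0 [p [_ e]]] /=.
have p0 : p != 0 by apply/negP => /eqP p0; move: hxh; rewrite e p0 mul0r eqxx.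
have q1 : (1 : R) <= q%:R by rewrite ler1n.
have hq : q%:R `^ (- t) <= `|h|.
  rewrite leNgt; apply/negP => hlt.
  have hin : (p, Posz q) \in s.
    have : pairs x t (p, Posz q).
      split; first by rewrite /= p0.
      by rewrite /= -pmulrn -e opprD addrA subrr add0r normrN.
    by rewrite hs.
  have := hAh _ hin q0; by rewrite /= -pmulrn e eqxx.
apply: (@le_trans _ _ ((q%:R `^ (- t)) `^ a)).
  rewrite -powRrM; apply: ler_powR => //; rewrite mulNr lerN2 mulrC //.
by apply: ge0_ler_powR; rewrite ?nnegrE ?powR_ge0 // ltW.
Qed.

Lemma seq_absz_bound (s : seq int) : exists M : nat, forall z, z \in s -> (absz z <= M)%N.
Proof.
elim: s => [|a s [M HM]]; first by exists 0%N.
exists (maxn (absz a) M) => z; rewrite in_cons => /orP [/eqP ->|/HM h]; rewrite leq_max ?leqnn ?h ?orbT //.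
Qed.

Lemma one_in_S {R : realType} (x : R) : ~ is_rational x -> infinite_set (pairs x 1).
Proof.
move=> hx hfin.
have x0 : 0 < `|x| by rewrite normr_gt0; apply/negP => /eqP x0; apply: hx; exists 0, 1%N; rewrite x0 mul0r.
have [s hs] := (finite_seqP _).1 (finite_image snd hfin).
have [M HM] := seq_absz_bound s.
set q := (M.+1 + Num.truncn (`|x|^-1))%N.
have q0 : (0 < q)%N by rewrite /q addSn.
have qpos : (0 : R) < q%:R by rewrite ltr0n.
have qx : 1 < q%:R * `|x|.
  rewrite -ltr_pdivrMr // div1r.
  by apply: lt_le_trans (truncnS_gt _) _; rewrite ler_nat /q addSn ltnS leq_addl.
set p := Num.floor (q%:R * x).
have hin : pairs x 1 (p, Posz q).
  split.
  - apply/andP; split => //; rewrite /p floor_neq0.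
    have [xn|xp] := ltP x 0.
    + by rewrite pmulr_rlt0 // xn.
    + by apply/orP; right; apply: ltW; move: qx; rewrite ger0_norm.
  - rewrite /= -pmulrn powR_inv1 ?ler0n //.
    have h1 := real_floor_le (num_real (q%:R * x)).
    have h2 := real_floorD1_gt (num_real (q%:R * x)).
    rewrite -/p in h1 h2; rewrite intrD in h2.
    have -> : x - p%:~R / q%:R = (q%:R * x - p%:~R) / q%:R by field; rewrite gt_eqF.
    rewrite normrM normfV (ger0_norm (ltW qpos)) ger0_norm ?subr_ge0 //.
    rewrite ltr_pdivrMr // mulVf ?gt_eqF //; lra.
have : [set` s] (Posz q) by rewrite -hs; exists (p, Posz q).
move/HM => /=; lia.
Qed.

Lemma irr_exp_ub {R : realType} (th x a : R) : ~ is_rational x -> 0 < th -> 0 < a ->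
  pointwise_holder (thomae th) x a -> (irrationality_exponent x <= (th / a)%:E)%E.
Proof.
move=> hx th0 a0 ha; apply: ge_ereal_sup => _ [s hs <-]; rewrite lee_fin.
rewrite ler_pdivlMr // mulrC; exact: (@holder_bound R th x a s hx th0 a0 ha hs).
Qed.

Theorem mainTheorem3 (R : realType) (theta : R) (htheta : 0 < theta) (x : R) :
  holder_exponent (thomae theta) x =
  (if `[< is_rational x >] then 0%E
   else match irrationality_exponent x with
        | (t%:E)%E => (theta / t)%:E
        | _ => 0%E
        end).
Proof.
have H0 : (0%:E <= holder_exponent (thomae theta) x)%E.
  apply: le_ereal_sup_tmp; exists 0%:E => //; exists 0 => //; split => //.
  exact: (@holder0 R theta x (ltW htheta)).
case: (pselect (is_rational x)) => hx.
  rewrite asboolT //; apply/le_anti/andP; split => //.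
  apply: ge_ereal_sup => _ [a [a0 ha] <-]; rewrite lee_fin leNgt; apply/negP => ap.
  exact: (@rational_not_holder R theta x a htheta hx ap ha).
rewrite asboolF //.
have hS : forall s, infinite_set (pairs x s) -> (s%:E <= irrationality_exponent x)%E.
  by move=> s hs; apply: ereal_sup_ubound; exists s.
have h1 := hS 1 (@one_in_S R x hx).
case E : (irrationality_exponent x) => [t| |]; rewrite E in h1 hS; last by [].
- have t1 : 1 <= t by rewrite -lee_fin.
  have t0 : 0 < t by apply: lt_le_trans t1.
  apply/le_anti/andP; split.
  + apply: ge_ereal_sup => _ [a [a0 ha] <-]; rewrite lee_fin.
    move: a0; rewrite le_eqVlt => /orP [/eqP <-|ap]; first by rewrite divr_ge0 // ltW.
    have := @irr_exp_ub R theta x a hx htheta ap ha; rewrite E lee_fin.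
    by rewrite ler_pdivlMr // ler_pdivlMr // mulrC.
  + rewrite leNgt; apply/negP => hlt.
    move: H0 hlt; case Es : (holder_exponent (thomae theta) x) => [s| |] //= H0 hlt.
    rewrite lee_fin in H0; rewrite lte_fin in hlt.
    set a := (s + theta / t) / 2.
    have ap : 0 < a by rewrite /a divr_gt0 // ltr_wpDl // divr_gt0.
    have as_ : s < a by rewrite /a; lra.
    have at_ : a < theta / t by rewrite /a; lra.
    have ha : pointwise_holder (thomae theta) x a.
      apply: (@holder_gap R theta x a (theta / a) hx (ltW htheta) ap).
      * move=> hinf; have := hS _ hinf; rewrite lee_fin leNgt => /negP; apply.
        by rewrite ltr_pdivlMr // mulrC -ltr_pdivlMr.
      * by rewrite mulrC divfK // gt_eqF.
    have : (a%:E <= holder_exponent (thomae theta) x)%E.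
      by apply: ereal_sup_ubound; exists a => //; split => //; exact: ltW.
    by rewrite Es lee_fin leNgt as_.
- apply/le_anti/andP; split => //.
  apply: ge_ereal_sup => _ [a [a0 ha] <-]; rewrite lee_fin leNgt; apply/negP => ap.
  by have := @irr_exp_ub R theta x a hx htheta ap ha; rewrite E.
Qed.
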